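(* There exists $M>0$ such that $$\inf_{\lambda\ge M,\ \beta>0}\left[\rho\,\phi(a)+\gamma\,\Phi(a)+\frac{2\gamma\,\phi(a)}{3\sqrt{n}}+\frac{\gamma}{12n-1}\right]>0,$$ where $n,\rho,a,\gamma$ are the functions of $(\beta,\lambda)$ defined in the context.
   Context: $\phi$ and $\Phi$ denote the standard normal density and distribution function. For $\lambda>0$ and $\beta\ge 0$ set $n=\lambda+\beta\sqrt{\lambda}$, $\rho=\lambda/n$, $a=\sqrt{-2n(1-\rho+\ln\rho)}$ (note $1-\rho+\ln\rho\le 0$), and $\gamma=(n-\lambda)/\sqrt{n}=\beta\sqrt{\rho}$. *)

(* Defs.v *)
From Stdlib Require Import Reals Lra.
Open Scope R_scope.

Definition phi (x : R) : R := exp (- (x ^ 2) / 2) / sqrt (2 * PI).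

Lemma phi_continuity : continuity phi.
Proof.
  unfold phi. intro x. apply continuity_pt_div.
  - apply continuity_pt_comp with (f1 := fun x => - x ^ 2 / 2) (f2 := exp).
    + reg.
    + apply derivable_continuous_pt, derivable_pt_exp.
  - apply continuity_pt_const. intros ? ?; reflexivity.
  - apply Rgt_not_eq, sqrt_lt_R0. pose proof PI_RGT_0; lra.
Qed.

Lemma phi_integrable (a b : R) : Riemann_integrable phi a b.
Proof.
  destruct (Rle_dec a b) as [H|H].
  - apply continuity_implies_RiemannInt; [exact H|]. intros; apply phi_continuity.
  - apply RiemannInt_P1, continuity_implies_RiemannInt; [lra|].
    intros; apply phi_continuity.
Qed.

(* standard normal distribution function:
   Phi x = int_{-oo}^x phi = 1/2 + int_0^x phi (oriented Riemann integral) *)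
Definition Phi (x : R) : R := / 2 + RiemannInt (phi_integrable 0 x).

Definition nn (lambda beta : R) : R := lambda + beta * sqrt lambda.
Definition rho (lambda beta : R) : R := lambda / nn lambda beta.
Definition aa (lambda beta : R) : R :=
  sqrt (- 2 * nn lambda beta * (1 - rho lambda beta + ln (rho lambda beta))).
Definition gam (lambda beta : R) : R := (nn lambda beta - lambda) / sqrt (nn lambda beta).

Definition target (lambda beta : R) : R :=
  let n := nn lambda beta in
  let r := rho lambda beta in
  let a := aa lambda beta in
  let g := gam lambda beta in
  r * phi a + g * Phi a + 2 * g * phi a / (3 * sqrt n) + g / (12 * n - 1).

(* Main.v *)
Require Import Defs.
From Stdlib Require Import Reals Lra.
Open Scope R_scope.

Lemma phi_nonneg x : 0 <= phi x.
Proof.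
  unfold phi. apply Rlt_le, Rdiv_lt_0_compat; [apply exp_pos|].
  apply sqrt_lt_R0. pose proof PI_RGT_0; lra.
Qed.

Lemma Phi_ge a : 0 <= a -> / 2 <= Phi a.
Proof.
  intro Ha. unfold Phi.
  assert (H := RiemannInt_const_bound (l := 0) (u := phi 0 + 1 + Rabs (RiemannInt (phi_integrable 0 a))) (phi_integrable 0 a) Ha).
  assert (0 <= RiemannInt (phi_integrable 0 a)).
  { apply Rle_trans with (0 * (a - 0)); [lra|].
    apply RiemannInt_P19 with (pr1 := RiemannInt_P14 0 a 0) (pr2 := phi_integrable 0 a) in Ha.
    - rewrite RiemannInt_P15 in Ha. lra.
    - intros; apply phi_nonneg. }
  lra.
Qed.

Lemma sqrt2pi : 2 <= sqrt (2 * PI).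
Proof.
  apply Rle_trans with (sqrt (2*2)); [rewrite sqrt_square; lra|].
  apply sqrt_le_1_alt. pose proof PI_RGT_0. pose proof PI2_1. lra.
Qed.

Theorem lemma4 :
  exists M : R, 0 < M /\
    exists c : R, 0 < c /\
      forall lambda beta : R, M <= lambda -> 0 < beta -> c <= target lambda beta.
Proof.
  exists 1. split; [lra|].
  exists (exp (-1) / (2 * sqrt (2 * PI))).
  pose proof sqrt2pi as S2. pose proof (exp_pos (-1)) as E0.
  assert (E1 : exp (-1) <= 1).
  { rewrite <- exp_0. apply exp_le_3 || (left; apply exp_increasing; lra). }
  split. { apply Rdiv_lt_0_compat; lra. }
  intros lam b Hl Hb.
  set (s := sqrt lam).
  assert (Hs : 1 <= s). { unfold s. rewrite <- sqrt_1. apply sqrt_le_1_alt. lra. }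
  assert (Hls : lam = s * s). { unfold s. rewrite sqrt_sqrt; lra. }
  set (t := b / s).
  assert (Ht : 0 < t) by (unfold t; apply Rdiv_lt_0_compat; lra).
  assert (Hbt : b = t * s) by (unfold t; field; lra).
  assert (Hn : nn lam b = s * s * (1 + t)) by (unfold nn; fold s; rewrite Hls, Hbt; ring).
  assert (Hr : rho lam b = / (1 + t)) by (unfold rho; rewrite Hn, Hls; field; lra).
  assert (Hnpos : 0 < nn lam b) by (rewrite Hn; nra).
  assert (Hsn : 0 < sqrt (nn lam b)) by (apply sqrt_lt_R0; lra).
  assert (Hrpos : 0 < rho lam b) by (rewrite Hr; apply Rinv_0_lt_compat; lra).
  assert (Hg : 0 < gam lam b).
  { unfold gam. apply Rdiv_lt_0_compat; [|lra]. rewrite Hn, Hls. nra. }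
  set (a := aa lam b).
  assert (Ha : 0 <= a) by apply sqrt_pos.
  assert (HP := Phi_ge a Ha).
  assert (Hpa := phi_nonneg a).
  assert (Hlower : exp (-1) / (2 * sqrt (2 * PI)) <= exp (-1) / 2 / 2) .
  { replace (exp (-1) / 2 / 2) with (exp (-1) / (2 * 2)) by (field; lra).
    unfold Rdiv. apply Rmult_le_compat_l; [lra|].
    apply Rinv_le_contravar; lra. }
  assert (Hmain : rho lam b * phi a + gam lam b / 2 <= target lam b).
  { unfold target. fold a.
    assert (0 <= 2 * gam lam b * phi a / (3 * sqrt (nn lam b))).
    { apply Rmult_le_pos; [nra|]. apply Rlt_le, Rinv_0_lt_compat. lra. }
    assert (0 <= gam lam b / (12 * nn lam b - 1)).
    { apply Rmult_le_pos; [lra|]. apply Rlt_le, Rinv_0_lt_compat. rewrite Hn. nra. }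
    nra. }
  destruct (Rle_lt_dec b 1) as [Hb1|Hb1].
  -
    assert (Hrh : / 2 <= rho lam b).
    { rewrite Hr. apply Rinv_le_contravar; [lra|]. assert (t <= 1).
      { unfold t. apply Rmult_le_reg_r with s; [lra|]. unfold Rdiv.
        rewrite Rmult_assoc, Rinv_l by lra. lra. }
      lra. }
    assert (Hln : ln (rho lam b) >= - t).
    { rewrite Hr, ln_Rinv by lra.
      assert (ln (1 + t) <= t); [|lra].
      rewrite <- (ln_exp t) at 2. left. apply ln_increasing; [lra| apply exp_ineq1; lra]. }
    assert (HX : - 2 * nn lam b * (1 - rho lam b + ln (rho lam b)) <= 2).
    { assert (1 - rho lam b + ln (rho lam b) >= - (t * t) / (1 + t)).
      { rewrite Hr in *. unfold Rdiv.
        assert (/ (1 + t) = 1 - t * / (1 + t)) by (field; lra).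
        assert (t * t * / (1 + t) = t - t * /(1+t)) by (field; lra). nra. }
      assert (- 2 * nn lam b * (1 - rho lam b + ln (rho lam b)) <= 2 * (t*s)*(t*s)).
      { rewrite Hn in *. assert (s * s * (1 + t) * ((t * t) / (1 + t)) = (t*s)*(t*s))
          by (field; lra). nra. }
      rewrite <- Hbt in H0. nra. }
    assert (Ha2 : a <= sqrt 2) by (apply sqrt_le_1_alt; exact HX).
    assert (Hsq2 : sqrt 2 * sqrt 2 = 2) by (apply sqrt_sqrt; lra).
    assert (Hphi : exp (-1) / sqrt (2 * PI) <= phi a).
    { unfold phi. unfold Rdiv. apply Rmult_le_compat_r.
      - apply Rlt_le, Rinv_0_lt_compat; lra.
      - destruct (Req_dec (-1) (- a ^ 2 * / 2)) as [E|E]; [rewrite E; lra|].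
        left. apply exp_increasing. simpl. nra. }
    assert (exp (-1) / (2 * sqrt (2 * PI)) <= rho lam b * phi a).
    { apply Rle_trans with (/2 * (exp (-1) / sqrt (2 * PI))).
      - right. field. lra.
      - apply Rmult_le_compat; try lra.
        apply Rlt_le, Rdiv_lt_0_compat; lra. }
    nra.
  -
    assert (Hg2 : / 2 <= gam lam b).
    { unfold gam. assert (Hsn2 : sqrt (nn lam b) <= 2 * (t * s) * s).
      { rewrite <- (sqrt_square (2 * (t * s) * s)) by nra. apply sqrt_le_1_alt.
        rewrite Hn. rewrite <- Hbt.
        assert (s * s * (1 + t) = s * s + b * s) by (rewrite Hbt; ring).
        assert (s <= b * s) by nra.
        assert (1 <= b * s) by nra.
        assert (s * s <= b * s * (b * s)) by (apply Rmult_le_compat; lra).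
        assert (b * s <= b * s * (b * s)) by nra. nra. }
      assert (nn lam b - lam = t * s * s) by (rewrite Hn, Hls; ring).
      rewrite H. apply Rmult_le_reg_r with (sqrt (nn lam b)); [lra|].
      unfold Rdiv. rewrite Rmult_assoc, Rinv_l by lra. rewrite <- Hbt in *. nra. }
    assert (0 <= rho lam b * phi a) by nra.
    nra.
Qed.
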